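(* Let $G=(V,E,t)$ be a threshold graph with type partition $V_1,\dots,V_{\mathrm{nd}}$, and fix $i\in[\mathrm{nd}]$. (i) Let $X\subseteq V$ satisfy $X=D_{G[X]}$, let $Y=Y(X)$, and let $u_{\max}$ be a node of maximum threshold in $X\cap V_i$. If there exists $v\in Y\cap V_i$ with $t(v)\le t(u_{\max})$, then $X'=(X\setminus\{u_{\max}\})\cup\{v\}$ satisfies $X'=D_{G[X']}$ and $|Y(X')|=|Y|$. (ii) Let $Y\subseteq V$ and let $v_{\max}$ be a node of maximum threshold in $Y\cap V_i$. If there exists $u\in D_{G,Y}\cap V_i$ with $t(u)\le t(v_{\max})$, then $Y'=(Y\setminus\{v_{\max}\})\cup\{u\}$ satisfies $|D_{G,Y'}|\le|D_{G,Y}|$.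
   Context: A threshold graph is an undirected graph $G=(V,E,t)$ with threshold function $t:V\to\mathbb{N}$; $\Gamma_G(v)$ denotes the neighborhood of $v$. Given $Y\subseteq V$ (the immunized nodes), the diffusion process in $G$ is the sequence $D_{G,Y}[1]\subseteq D_{G,Y}[2]\subseteq\cdots$ with $D_{G,Y}[1]=\{u\in V\setminus Y: t(u)=0\}$ and $D_{G,Y}[\tau]=D_{G,Y}[\tau-1]\cup\{u\in V\setminus Y: |\Gamma_G(u)\cap D_{G,Y}[\tau-1]|\ge t(u)\}$; it stabilizes, and $D_{G,Y}$ denotes the final set. Write $D_G=D_{G,\emptyset}$. For $X\subseteq V$, $G[X]$ is the induced subgraph with thresholds restricted from $t$, and $Y(X)=\{u\in V\setminus X: |\Gamma_G(u)\cap D_{G[X]}|\ge t(u)\}$. Two nodes $u,v$ have the same type if $\Gamma_G(v)\setminus\{u\}=\Gamma_G(u)\setminus\{v\}$; a type partition $V_1,\dots,V_{\mathrm{nd}}$ is a partition of $V$ into classes whose nodes all have the same type. *)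

(* Defs.v *)
From mathcomp Require Import all_boot.
Set Implicit Arguments. Unset Strict Implicit. Unset Printing Implicit Defensive.

Section Threshold.
Variable T : finType.
Variable e : rel T.
Variable t : T -> nat.

Definition simple_graph := symmetric e /\ irreflexive e.

Definition nbhd (v : T) : {set T} := [set w | e v w].

(* One diffusion step in the induced subgraph on vertex set W, with immunized
   set Y:  S |-> S ∪ {u ∈ W \ Y : |Gamma_{G[W]}(u) ∩ S| >= t(u)}. *)
Definition diff_step (W Y S : {set T}) : {set T} :=
  S :|: [set u in W :\: Y | t u <= #|(nbhd u :&: W) :&: S| ].

Definition diff_seq (W Y : {set T}) (tau : nat) : {set T} :=
  iter tau (diff_step W Y) set0.

(* The final (stabilized) set: the chain is increasing in a finite lattice,
   hence stable after #|T| steps. *)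
Definition diffusion (W Y : {set T}) : {set T} := diff_seq W Y #|T|.

Definition D_GY (Y : {set T}) : {set T} := diffusion setT Y.
Definition D_ind (X : {set T}) : {set T} := diffusion X set0.

Definition YX (X : {set T}) : {set T} :=
  [set u | (u \notin X) && (t u <= #|nbhd u :&: D_ind X|)].

Definition same_type (u v : T) : Prop := nbhd v :\ u = nbhd u :\ v.

Definition type_partition (P : {set {set T}}) : Prop :=
  partition P [set: T] /\
  forall C, C \in P -> forall u v, u \in C -> v \in C -> same_type u v.

Definition max_threshold_in (A : {set T}) (u : T) : Prop :=
  u \in A /\ forall w, w \in A -> t w <= t u.

End Threshold.

(* Main.v *)
Require Import Defs.
From mathcomp Require Import all_boot.

Section Helpers.
Variables (T : finType) (e : rel T).

Definition sw (a b x : T) : T := if x == a then b else if x == b then a else x.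

Variant sw_spec (a b x : T) : T -> Type :=
  | SwFirst of x = a : sw_spec a b x b
  | SwSecond of x = b & x != a : sw_spec a b x a
  | SwNone of x != a & x != b : sw_spec a b x x.

Lemma swP a b x : sw_spec a b x (sw a b x).
Proof.
rewrite /sw; case: eqVneq => [->|xa]; first exact: SwFirst.
case: eqVneq => [xb|xb]; first by rewrite xb; apply: SwSecond; rewrite -?xb.
exact: SwNone.
Qed.

Lemma swK a b : a != b -> involutive (sw a b).
Proof.
move=> ab x; case: (swP a b x) => [->|-> ba|xa xb].
- by rewrite /sw eqxx eq_sym (negbTE ab).
- by rewrite /sw eqxx.
- by rewrite /sw (negbTE xa) (negbTE xb).
Qed.

Lemma sw_edge a b : simple_graph e -> same_type e a b ->
  forall x y, e (sw a b x) (sw a b y) = e x y.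
Proof.
case=> esym eirr; rewrite /same_type => st.
have H : forall y, y != a -> y != b -> e a y = e b y.
  move=> y ya yb; have := congr1 (fun A : {set T} => y \in A) st.
  by rewrite !inE ya yb /= => ->.
move=> x y.
case: (swP a b x) => [->|-> xa|xa xb]; case: (swP a b y) => [->|-> ya|ya yb];
  rewrite ?eirr //; try by rewrite esym.
- by rewrite H.
- by rewrite -H.
- by rewrite esym (esym x) H.
- by rewrite esym (esym x) H.
Qed.

Lemma seqS t W Y n :
  diff_seq e t W Y n.+1 = diff_step e t W Y (diff_seq e t W Y n).
Proof. by []. Qed.

Lemma seq_sub t W Y n : diff_seq e t W Y n \subset W :\: Y.
Proof.
elim: n => [|n IH]; first by rewrite sub0set.
rewrite seqS /diff_step subUset IH /=.
by apply/subsetP => x; rewrite in_set => /andP[].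
Qed.

Lemma seq_mono t1 t2 W Y n : (forall x, x \in W :\: Y -> t2 x <= t1 x) ->
  diff_seq e t1 W Y n \subset diff_seq e t2 W Y n.
Proof.
move=> H; elim: n => [|n IH]; first by rewrite sub0set.
rewrite !seqS /diff_step; apply/subsetP => x; rewrite !in_setU !in_set.
case/orP => [xS|/andP[xWY le]]; first by rewrite (subsetP IH _ xS).
apply/orP; right; rewrite xWY /=.
have xWY2 : x \in W :\: Y by rewrite inE.
apply: leq_trans (H _ xWY2) (leq_trans le _).
by apply: subset_leq_card; apply: setIS.
Qed.

Lemma seq_thr t W Y n x : x \in diff_seq e t W Y n -> t x <= #|nbhd e x :&: W|.
Proof.
elim: n => [|n IH]; first by rewrite inE.
rewrite seqS in_setU in_set => /orP[/IH //| /andP[_ le]].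
apply: leq_trans le _; apply: subset_leq_card; apply: subsetIl.
Qed.

Lemma nbE (s : T -> T) : involutive s -> (forall x y, e (s x) (s y) = e x y) ->
  forall x, nbhd e x = s @^-1: nbhd e (s x).
Proof. by move=> sK se x; apply/setP => y; rewrite !inE se. Qed.

Lemma seq_perm (s : T -> T) t (W Y : {set T}) n : involutive s ->
  (forall x y, e (s x) (s y) = e x y) ->
  diff_seq e t (s @^-1: W) (s @^-1: Y) n = s @^-1: diff_seq e (t \o s) W Y n.
Proof.
move=> sK se; have sinj : injective s := can_inj sK.
elim: n => [|n IH]; first by apply/setP => x; rewrite !inE.
rewrite !seqS IH; apply/setP => x; rewrite /diff_step in_setU in_set.
rewrite (nbE s sK se x) -!preimsetI card_preimset //.
rewrite !inE /= sK; done.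
Qed.

End Helpers.
Arguments sw {T}.
Arguments swP {T}.
Arguments swK {T a b}.
Arguments sw_edge {T e a b}.
Arguments seq_sub {T e t W Y n}.
Arguments seq_mono {T e t1 t2 W Y n}.
Arguments seq_thr {T e t W Y n x}.
Arguments nbE {T e s}.
Arguments seq_perm {T e s t W Y n}.

Theorem proposition3 (T : finType) (e : rel T) (t : T -> nat)
  (P : {set {set T}}) (Vi : {set T}) :
  simple_graph e -> type_partition e P -> Vi \in P ->
  (forall (X : {set T}) (umax v : T),
      X = D_ind e t X ->
      max_threshold_in t (X :&: Vi) umax ->
      v \in YX e t X :&: Vi -> t v <= t umax ->
      let X' := (X :\ umax) :|: [set v] in
      X' = D_ind e t X' /\ #|YX e t X'| = #|YX e t X|) /\
  (forall (Y : {set T}) (vmax u : T),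
      max_threshold_in t (Y :&: Vi) vmax ->
      u \in D_GY e t Y :&: Vi -> t u <= t vmax ->
      let Y' := (Y :\ vmax) :|: [set u] in
      #|D_GY e t Y'| <= #|D_GY e t Y|).
Proof.
move=> sg [_ tpP] ViP; split.
- move=> X umax v HX [umX _] vY tv X'.
  case/setIP: vY => vYX vVi; case/setIP: umX => umXX umVi.
  have st : same_type e umax v := tpP _ ViP _ _ umVi vVi.
  move: vYX; rewrite inE -HX => /andP[vX tvle].
  have umv : umax != v by apply: contraNneq vX => <-.
  have sK := swK umv.
  have se := sw_edge sg st.
  have X'E : X' = sw umax v @^-1: X.
    apply/setP => x; rewrite /X' !inE.
    case: (swP umax v x) => [->|-> _|xu xv].
    + by rewrite eqxx (negbTE umv) (negbTE vX).
    + by rewrite eqxx orbT umXX.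
    + by rewrite xu (negbTE xv) orbF.
  have Dsub : diff_seq e t X set0 #|T| \subset diff_seq e (t \o sw umax v) X set0 #|T|.
    apply: seq_mono => x; rewrite !inE /= => xX.
    case: (swP umax v x) => [->|xv _|] //.
    by move: xX; rewrite xv (negbTE vX) ?andbF.
  have DX : diff_seq e (t \o sw umax v) X set0 #|T| = X.
    apply/eqP; rewrite eqEsubset; apply/andP; split.
      by apply: subset_trans seq_sub _; rewrite setD0.
    by rewrite {1}HX; exact: Dsub.
  have DX' : D_ind e t X' = X'.
    rewrite /D_ind /diffusion X'E -(preimset0 (sw umax v)) seq_perm //.
    by rewrite ?preimset0 DX.
  split; first by rewrite DX'.
  have YE : YX e t X' = sw umax v @^-1: YX e t X.
    rewrite /YX DX' X'E -HX; apply/setP => w; rewrite !in_set.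
    rewrite (nbE sK se w) -preimsetI card_preimset; last exact: can_inj sK.
    rewrite ?inE.
    idtac.
    case: (swP umax v w) => [->|-> _|//].
    + rewrite vX tvle /=.
      have := umXX; rewrite {1}HX => /seq_thr H.
      apply: leq_trans H _; apply: subset_leq_card.
      apply/subsetP => y; rewrite !inE => /andP[ey yX]; rewrite yX andbT.
      have := congr1 (fun A : {set T} => y \in A) (st : nbhd e v :\ umax = nbhd e umax :\ v).
      case: sg => esym eirr.
      have yu : y != umax by apply: contraTneq ey => ->; rewrite eirr.
      have yv : y != v by apply: contraNneq vX => <-.
      by rewrite !inE yu yv /= => ->.
    + by rewrite umXX.
  by rewrite YE card_preimset //; exact: can_inj sK.
- move=> Y vmax u [vmY _] uD tu.
  pose Y' := Y :\ vmax :|: [set u].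
  change (#|D_GY e t Y'| <= #|D_GY e t Y|).
  case/setIP: vmY => vmYY vmVi; case/setIP: uD => uDY uVi.
  have st : same_type e u vmax := tpP _ ViP _ _ uVi vmVi.
  have uY : u \notin Y.
    by have := subsetP seq_sub _ uDY; rewrite !inE andbT.
  have uvm : u != vmax by apply: contraNneq uY => ->.
  have sK := swK uvm.
  have se := sw_edge sg st.
  have Y'E : Y' = sw u vmax @^-1: Y.
    apply/setP => x; rewrite /Y' !inE.
    case: (swP u vmax x) => [->|-> _|xu xv].
    + by rewrite eqxx orbT vmYY.
    + by rewrite eqxx /= eq_sym (negbTE uvm) (negbTE uY).
    + by rewrite xv (negbTE xu) orbF.
  have E : D_GY e t Y' = sw u vmax @^-1: diff_seq e (t \o sw u vmax) setT Y #|T|.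
    by rewrite /D_GY /diffusion Y'E -seq_perm // preimsetT.
  rewrite E card_preimset; last exact: can_inj sK.
  apply: subset_leq_card; apply: seq_mono => x; rewrite !inE /= => /andP[xY _].
  case: (swP u vmax x) => [->|xv _|] //.
  by move: xY; rewrite xv vmYY.
Qed.
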